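(* Let $\Lambda_1$ be a subgroup of $\mathbf{R}^m$ and $\Lambda_2$ a subgroup of $\mathbf{R}^m$ such that $\Lambda_1\oplus\Lambda_2$ is a lattice of covolume $1$ of $\mathbf{R}^m$, and let $C\subset\mathbf{R}^m$ be compact. Let $C_1$ be the projection of $C$ on $\mathbf{R}^m/\Lambda_1$ and $C_2$ the projection of $C$ on $\mathbf{R}^m/(\Lambda_1\oplus\Lambda_2)$, and set \[D_1=\operatorname{Leb}\big\{x\in C_1\mid\operatorname{Card}\{\lambda_2\in\Lambda_2\mid x\in C_1+\lambda_2\}\ge2\big\}.\] Then $\operatorname{Leb}(C_2)\le\operatorname{Leb}(C_1)-D_1/2$.
   Context: $\operatorname{Leb}$ denotes the measure induced by Lebesgue measure on the quotients of $\mathbf{R}^m$; $\Lambda_2$ acts by translation on $\mathbf{R}^m/\Lambda_1$. *)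

(* Defs.v *)
From HB Require Import structures.
From mathcomp Require Import all_boot all_order all_algebra.
From mathcomp Require Import all_classical all_reals all_analysis.
Set Implicit Arguments. Unset Strict Implicit. Unset Printing Implicit Defensive.
Import Order.TTheory GRing.Theory Num.Theory numFieldNormedType.Exports.
Local Open Scope classical_set_scope.
Local Open Scope ring_scope.

Section LebesgueRm.
Variables (R : realType) (m : nat).
Local Notation V := 'rV[R]_m.

Definition hbox (a b : V) : set V :=
  [set x | forall i : 'I_m, a ord0 i <= x ord0 i < b ord0 i].

Definition hbox_vol (a b : V) : \bar R :=
  (\prod_(i < m) Num.max 0 (b ord0 i - a ord0 i))%:E.

(* Lebesgue outer measure on R^m: infimum of total volumes of countable
   covers by half-open boxes (K selects which boxes are used, so that
   finite/empty covers are allowed). *)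
Definition leb (A : set V) : \bar R :=
  ereal_inf [set s : \bar R | exists (a b : nat -> V) (K : pred nat),
     A `<=` \bigcup_(k in [set k | K k]) hbox (a k) (b k) /\
     s = (\sum_(k <oo | K k) hbox_vol (a k) (b k))%E].

Definition leb_measurable (F : set V) : Prop :=
  forall A : set V, leb A = (leb (A `&` F) + leb (A `\` F))%E.

Definition mink_sum (A B : set V) : set V := [set a + b | a in A & b in B].

Definition is_subgroup (L : set V) : Prop :=
  L 0 /\ forall x y, L x -> L y -> L (x - y).

Definition covol1_lattice (L : set V) : Prop :=
  exists B : 'M[R]_m, `|\det B| = 1 /\
    L = [set z *m B | z in [set z : V | forall i, z ord0 i \is a Num.int]].

Definition fund_domain (L F : set V) : Prop :=
  leb_measurable F /\ forall x : V, exists! l, L l /\ F (x + l).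

(* Lebesgue measure on R^m / L of a subset of the quotient, represented by
   its (L-invariant) preimage S in R^m, computed through a measurable
   fundamental domain F of L. *)
Definition quot_leb (F S : set V) : \bar R := leb (S `&` F).

End LebesgueRm.

(* Main.v *)
Require Import Defs.
From HB Require Import structures.
From mathcomp Require Import all_boot all_order all_algebra.
From mathcomp Require Import all_classical all_reals all_analysis.
From mathcomp Require Import measurable_realfun.
From mathcomp Require Import lra.
Set Implicit Arguments. Unset Strict Implicit. Unset Printing Implicit Defensive.
Import Order.TTheory GRing.Theory Num.Theory numFieldNormedType.Exports.
Local Open Scope classical_set_scope.
Local Open Scope ring_scope.

Section Outer.
Variables (R : realType) (m : nat).
Local Notation V := 'rV[R]_m.
Local Open Scope ereal_scope.

Lemma hbox_vol_ge0 (a b : V) : 0 <= hbox_vol a b.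
Proof. by rewrite lee_fin; apply: prodr_ge0 => i _; rewrite le_max lexx. Qed.

Lemma leb_ge0 (A : set V) : 0 <= leb A.
Proof.
apply: le_ereal_inf_tmp => _ [a [b [K [_ ->]]]].
by apply: nneseries_ge0 => n _ _; exact: hbox_vol_ge0.
Qed.

Lemma leb0 : leb (set0 : set V) = 0.
Proof.
apply/eqP; rewrite eq_le leb_ge0 andbT.
apply: ereal_inf_lbound; exists (fun=> 0%R), (fun=> 0%R), xpred0; split => //.
by rewrite eseries0.
Qed.

Lemma le_leb : {homo (@leb R m) : A B / A `<=` B >-> A <= B}.
Proof.
move=> A B AB; apply: le_ereal_inf_tmp => _ [a [b [K [cov ->]]]].
apply: ereal_inf_lbound; exists a, b, K; split => //.
exact: subset_trans cov.
Qed.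

Lemma leb_sigma_subadditive : sigma_subadditive (@leb R m).
Proof.
move=> A; have [[i ioo]|] := pselect (exists i, leb (A i) = +oo).
  rewrite (eseries_pinfty _ _ ioo) ?leey// => n _.
  by rewrite -ltNye (lt_le_trans _ (leb_ge0 _)).
rewrite -forallNE => Aoo.
suff add2e (e : {posnum R}) :
    leb (\bigcup_n A n) <= \sum_(i <oo) leb (A i) + e%:num%:E.
  by apply/lee_addgt0Pr => _/posnumP[].
rewrite (le_trans _ (epsilon_trick _ _ _))//; last first.
  by move=> n; exact: leb_ge0.
pose P n (c : (nat -> V) * (nat -> V) * pred nat) :=
  A n `<=` \bigcup_(k in [set k | c.2 k]) hbox (c.1.1 k) (c.1.2 k) /\
  \sum_(k <oo | c.2 k) hbox_vol (c.1.1 k) (c.1.2 k)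
     <= leb (A n) + (e%:num / (2 ^ n.+1)%:R)%:E.
have [G PG] : {G : nat -> (nat -> V) * (nat -> V) * pred nat &
     forall n, P n (G n)}.
  apply: (@choice _ _ P) => n; rewrite /P /leb.
  set S := (X in ereal_inf X); move infS : (ereal_inf S) => iS.
  case: iS infS => [r Sr|Soo|Soo].
  - have en1 : (0 < e%:num / (2 ^ n.+1)%:R)%R by [].
    have /(lb_ereal_inf_adherent en1) : ereal_inf S \is a fin_num by rewrite Sr.
    move=> [x [a [b [K [cov ->]]]] xS].
    by exists (a, b, K); split => //; rewrite -Sr; exact/ltW.
  - by have := Aoo n; rewrite /leb Soo.
  - suff : lbound S 0 by move/le_ereal_inf_tmp; rewrite Soo.
    by move=> _ [a [b [K [_ ->]]]]; apply: nneseries_ge0 => *; exact: hbox_vol_ge0.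
pose w (p : nat * nat) : \bar R :=
  if (G p.1).2 p.2 then hbox_vol ((G p.1).1.1 p.2) ((G p.1).1.2 p.2) else 0.
have w0 p : 0 <= w p by rewrite /w; case: ifP => // _; exact: hbox_vol_ge0.
apply: (@le_trans _ _ (\esum_(i in setT) w i)).
  rewrite /leb; apply: ereal_inf_lbound => /=.
  have /card_esym/ppcard_eqP[f] := card_nat2.
  exists (fun i => (G (f i).1).1.1 (f i).2), (fun i => (G (f i).1).1.2 (f i).2),
    (fun i => (G (f i).1).2 (f i).2); split.
    move=> t [i _] /((PG i).1) [j /= Kj hj].
    exists (f^-1%FUN (i, j)) => //=; rewrite invK ?inE //.
  rewrite eseries_mkcond.
  rewrite -(esum_pred_image w _ xpredT) ?[fun=> _]set_true//.
  congr esum; apply/seteqP; split => [p _|//].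
  by exists (f^-1%FUN p) => //; rewrite invK ?inE.
rewrite (_ : esum _ _ = \sum_(i <oo) \sum_(j <oo ) w (i, j)); last first.
  pose J : nat -> set (nat * nat) := fun i => [set (i, j) | j in setT].
  rewrite (_ : setT = \bigcup_k J k); last first.
    by rewrite predeqE => -[a b]; split => // _; exists a => //; exists b.
  rewrite esum_bigcupT /=; last 2 first.
    - apply/trivIsetP => i j _ _ ij.
      rewrite predeqE => -[n m'] /=; split => //= -[] [_] _ [<-{n} _].
      by move=> [m'' _] [] /esym/eqP; rewrite (negbTE ij).
    - by move=> /= [n m'].
  rewrite -(image_id [set: nat]) -fun_true esum_pred_image//; last first.
    by move=> n _; exact: esum_ge0.
  apply: eq_eseriesr => /= j _.
  rewrite -(esum_pred_image w (pair j) predT)//=; last first.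
    by move=> ? ? _ _; exact: (@can_inj _ _ _ snd).
  by congr esum; rewrite predeqE => -[a b]; split; move=> [i _ <-]; exists i.
apply: lee_lim.
- apply: is_cvg_nneseries => n *.
  by apply: nneseries_ge0 => m' *; exact: w0.
- by apply: is_cvg_nneseries => n *; apply: adde_ge0 => //; exact: leb_ge0.
- near=> n; apply: lee_sum => i _.
  by rewrite /w /= -eseries_mkcond; exact: (PG i).2.
Unshelve. all: by end_near. Qed.

HB.instance Definition _ := isOuterMeasure.Build R V (@leb R m)
  leb0 leb_ge0 le_leb leb_sigma_subadditive.

End Outer.


Section Trans.
Variables (R : realType) (m : nat).
Local Notation V := 'rV[R]_m.

Definition tr (l : V) (A : set V) : set V := [set x | A (x + l)].

Lemma trK l A : tr (- l) (tr l A) = A.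
Proof. by apply/seteqP; split => x; rewrite /tr /= subrK. Qed.

Lemma hbox_tr l a b : tr l (hbox a b) = hbox (a - l) (b - l).
Proof.
apply/seteqP; split => x; rewrite /tr /hbox /= => H i; have := H i;
  rewrite !mxE; by rewrite lerBlDr ltrBrDr.
Qed.

Lemma hbox_vol_tr (l a b : V) : hbox_vol (a - l) (b - l) = hbox_vol a b.
Proof.
rewrite /hbox_vol; congr (_%:E); apply: eq_bigr => i _; rewrite !mxE.
by congr Num.max; rewrite opprB addrA subrK.
Qed.

Local Open Scope ereal_scope.

Lemma leb_tr_le l (A : set V) : leb (tr l A) <= leb A.
Proof.
apply: le_ereal_inf_tmp => _ [a [b [K [cov ->]]]].
apply: ereal_inf_lbound; exists (fun k => a k - l)%R, (fun k => b k - l)%R, K; split.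
  move=> x /cov [k Kk hk]; exists k => //; by rewrite -hbox_tr.
by apply: eq_eseriesr => k _; rewrite hbox_vol_tr.
Qed.

Lemma leb_tr l (A : set V) : leb (tr l A) = leb A.
Proof.
apply/eqP; rewrite eq_le leb_tr_le /=.
by rewrite -{1}(trK l A) leb_tr_le.
Qed.

End Trans.


Lemma splitmax (R : realType) (a b c : R) :
  Num.max 0 (Num.min b c - a) + Num.max 0 (b - Num.max a c) = Num.max 0 (b - a).
Proof.
rewrite (maxEle a c) (minEle b c).
case: (lerP a c) => h1; case: (lerP b c) => h2; rewrite !maxEle;
  case: (lerP 0 (b - a)) => h3;
  try (case: (lerP 0 (b - c)) => h4); try (case: (lerP 0 (b - a)) => h4);
  try (case: (lerP 0 (c - a)) => h5);  try (case: (lerP 0 (b - a)) => h5); lra.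
Qed.

Section Meas.
Variables (R : realType) (m : nat).
Local Notation V := 'rV[R]_m.
Definition lebo : {outer_measure set V -> \bar R} := @leb R m.
Definition T := caratheodory_type lebo.
Definition mu : measure T R := (lebo : set T -> \bar R).
Lemma muE A : mu A = leb A. Proof. by []. Qed.

Local Open Scope ereal_scope.

Lemma measurableE (A : set V) : measurable (A : set T) = lebo.-caratheodory A.
Proof. by []. Qed.

Lemma measurableP (A : set V) : measurable (A : set T) <-> leb_measurable A.
Proof.
rewrite measurableE; split => h X; first by rewrite setDE; exact: h.
by rewrite -setDE; exact: h.
Qed.

Lemma measurable_tr (l : V) (A : set V) :
  measurable (A : set T) -> measurable (tr l A : set T).
Proof.
rewrite !measurableP => mA X.
have E1 : tr (- l) X `&` A = tr (- l) (X `&` tr l A).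
  by apply/seteqP; split => x; rewrite /tr /= ?subrK ?addrK.
have E2 : tr (- l) X `\` A = tr (- l) (X `\` tr l A).
  by apply/seteqP; split => x; rewrite /tr /= ?subrK ?addrK.
rewrite -(leb_tr (- l) X) (mA (tr (- l) X)) /=.
by rewrite E1 E2 !leb_tr.
Qed.

Lemma measurable_half (i : 'I_m) (c : R) :
  measurable ([set x : V | x ord0 i < c]%R : set T).
Proof.
rewrite measurableE; apply: le_caratheodory_measurable => X.
apply: le_ereal_inf_tmp => _ [a [b [K [cov ->]]]].
pose b' k : V := \row_j (if j == i then Num.min (b k ord0 j) c else b k ord0 j)%R.
pose a' k : V := \row_j (if j == i then Num.max (a k ord0 j) c else a k ord0 j)%R.
have Ev k : hbox_vol (a k) (b k) = hbox_vol (a k) (b' k) + hbox_vol (a' k) (b k).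
  rewrite /hbox_vol -EFinD; congr (_%:E).
  rewrite (bigD1 i) //= [X in _ = (X + _)%R](bigD1 i) //= [X in _ = (_ + X)%R](bigD1 i) //=.
  rewrite !mxE !eqxx.
  have -> : (\prod_(j < m | j != i) Num.max 0 (b' k ord0 j - a k ord0 j) =
     \prod_(j < m | j != i) Num.max 0 (b k ord0 j - a k ord0 j))%R.
    by apply: eq_bigr => j /negbTE ji; rewrite !mxE ji.
  have -> : (\prod_(j < m | j != i) Num.max 0 (b k ord0 j - a' k ord0 j) =
     \prod_(j < m | j != i) Num.max 0 (b k ord0 j - a k ord0 j))%R.
    by apply: eq_bigr => j /negbTE ji; rewrite !mxE ji.
  by rewrite -mulrDl splitmax.
have ge0 k : 0 <= hbox_vol (a k) (b' k) by exact: hbox_vol_ge0.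
have ge0' k : 0 <= hbox_vol (a' k) (b k) by exact: hbox_vol_ge0.
rewrite (eq_eseriesr (fun k _ => Ev k)) nneseriesD //.
apply: leeD.
- apply: ereal_inf_lbound; exists a, b', K; split => //.
  move=> x [/cov [k Kk hk] xc]; exists k => // j; have := hk j; rewrite !mxE.
  by case: eqP => // ->; rewrite lt_min xc => /andP[-> ->].
- apply: ereal_inf_lbound; exists a', b, K; split => //.
  move=> x [/cov [k Kk hk] /negP xc]; rewrite -leNgt in xc.
  exists k => // j; have := hk j; rewrite !mxE.
  by case: eqP => // ->; rewrite ge_max xc andbT.
Qed.

End Meas.


Section Meas2.
Variables (R : realType) (m : nat).
Local Notation V := 'rV[R]_m.
Local Notation T := (T R m).

Lemma measurable_hbox (a b : V) : measurable (hbox a b : set T).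
Proof.
pose S (k : nat) : set V := [set x | forall i : 'I_m, (i : nat) = k ->
   a ord0 i <= x ord0 i < b ord0 i].
have -> : hbox a b = \bigcap_k S k.
  apply/seteqP; split => [x hx k _ i _|x hx i]; first exact: hx.
  by apply: (hx i) => //.
apply: bigcapT_measurable => k.
have [km|mk] := ltnP k m; last first.
  have -> : S k = setT.
    by apply/seteqP; split => // x _ i ik; move: (ltn_ord i); rewrite ik ltnNge mk.
  exact: measurableT.
pose i0 := Ordinal km.
have -> : S k = [set x : V | x ord0 i0 < b ord0 i0] `&` ~` [set x : V | x ord0 i0 < a ord0 i0].
  apply/seteqP; split => x /=.
    move=> h; have /andP[h1 h2] := h i0 erefl; split => //; apply/negP; rewrite -leNgt //.
  move=> [h1 /negP h2] i ik; have -> : i = i0 by apply: val_inj.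
  by rewrite h1 andbT leNgt.
apply: measurableI; first exact: measurable_half.
apply: measurableC; exact: measurable_half.
Qed.

Lemma ball_coord (x y : V) e : 0 < e -> (forall i, `|x ord0 i - y ord0 i| < e) -> ball x e y.
Proof. move=> e0 h; split => // i j; rewrite (ord1 i); exact: h. Qed.

Lemma open_ball_in (U : set V) x : open U -> U x -> exists2 e : R, 0 < e & ball x e `<=` U.
Proof.
move=> oU Ux. have : nbhs x U by rewrite nbhsE; exists U.
by move/nbhs_ballP => [e e0 h]; exists e.
Qed.

Lemma measurable_open (U : set V) : open U -> measurable (U : set T).
Proof.
move=> oU.
pose bx (pq : 'rV[rat]_m * 'rV[rat]_m) : set V :=
  hbox (map_mx ratr pq.1) (map_mx ratr pq.2).
pose B (n : nat) : set V := match pickle_inv n with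
  | Some pq => if `[< bx pq `<=` U >] then bx pq else set0
  | None => set0 end.
have -> : U = \bigcup_n B n.
  apply/seteqP; split; last first.
    move=> x [n _]; rewrite /B; case: (pickle_inv n) => // pq.
    by case: asboolP => // h /h.
  move=> x Ux; have [e e0 be] := open_ball_in oU Ux.
  have hp : forall i : 'I_m, exists q : rat, x ord0 i - e < ratr q < x ord0 i.
    move=> i; have [|q] := @rat_in_itvoo R (x ord0 i - e) (x ord0 i).
      by rewrite ltrBlDr ltrDl.
    by rewrite in_itv /= => h; exists q.
  have hq : forall i : 'I_m, exists q : rat, x ord0 i < ratr q < x ord0 i + e.
    move=> i; have [|q] := @rat_in_itvoo R (x ord0 i) (x ord0 i + e).
      by rewrite ltrDl.
    by rewrite in_itv /= => h; exists q.
  have [fp Hp] := choice hp; have [fq Hq] := choice hq.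
  pose pq : 'rV[rat]_m * 'rV[rat]_m := (\row_i fp i, \row_i fq i).
  have sub : bx pq `<=` U.
    move=> y hy; apply: be; apply: ball_coord => // i.
    have := hy i; have := Hp i; have := Hq i; rewrite /= !mxE.
    move=> /andP[h1 h2] /andP[h3 h4] /andP[h5 h6].
    rewrite ltr_norml; apply/andP; split; lra.
  exists (pickle pq) => //; rewrite /B pickleK_inv.
  case: asboolP => // _ i; rewrite /= !mxE.
  have := Hp i; have := Hq i => /andP[h1 h2] /andP[h3 h4].
  by rewrite (ltW h4) h1.
apply: bigcupT_measurable => n; rewrite /B.
case: (pickle_inv n) => [pq|]; last exact: measurable0.
case: asboolP => _; last exact: measurable0.
exact: measurable_hbox.
Qed.

Lemma measurable_closed (C : set V) : closed C -> measurable (C : set T).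
Proof.
move=> cC; rewrite -(setCK C); apply: measurableC.
by apply: measurable_open; exact: closed_openC.
Qed.

End Meas2.


Section Lat.
Variables (R : realType) (m : nat) (B : 'M[R]_m).
Hypothesis hB : \det B != 0.
Local Notation V := 'rV[R]_m.

Definition Lam : set V :=
  [set z *m B | z in [set z : V | forall i, z ord0 i \is a Num.int]].

Definition vv (n : nat) : option V :=
  omap (fun z : 'rV[int]_m => map_mx intr z *m B) (pickle_inv n).

Lemma vv_inj n n' l : vv n = Some l -> vv n' = Some l -> n = n'.
Proof.
rewrite /vv; case En : (pickle_inv n) => [z|//]; case En' : (pickle_inv n') => [z'|//] /=.
move=> [<-] [] /(congr1 (mulmx^~ (invmx B))).
have uB : B \in unitmx by rewrite unitmxE unitfE.
rewrite !(mulmxK uB) => /matrixP E.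
have zz : z' = z.
  apply/matrixP => i j; have := E i j; rewrite !mxE; exact: intr_inj.
have h1 := @pickle_invK 'rV[int]_m n; have h2 := @pickle_invK 'rV[int]_m n'.
by rewrite En /= in h1; rewrite En' /= in h2; rewrite -h1 -h2 zz.
Qed.

Lemma vv_surj l : Lam l -> exists n, vv n = Some l.
Proof.
move=> [z zi <-]; exists (pickle (map_mx (fun r => Num.floor r) z)).
rewrite /vv pickleK_inv /=; congr (Some (_ *m B)).
apply/matrixP => i j; rewrite !mxE (ord1 i).
by apply: floorK; exact: zi.
Qed.

Local Open Scope ereal_scope.

Definition lterm (L : set V) (f : V -> \bar R) (n : nat) : \bar R :=
  match vv n with Some l => if `[< L l >] then f l else 0 | None => 0 end.

Definition lsum (L : set V) (f : V -> \bar R) : \bar R :=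
  \sum_(n <oo) lterm L f n.

Lemma lterm_ge0 L f : (forall l, L l -> 0 <= f l) -> forall n, 0 <= lterm L f n.
Proof.
move=> f0 n; rewrite /lterm; case: (vv n) => // l; case: asboolP => // Ll.
exact: f0.
Qed.

Lemma lsum_ge0 L f : (forall l, L l -> 0 <= f l) -> 0 <= lsum L f.
Proof. by move=> f0; apply: nneseries_ge0 => n _ _; exact: lterm_ge0. Qed.

Lemma lsum_ge1 L f l : L `<=` Lam -> (forall l, L l -> 0 <= f l) -> L l ->
  f l <= lsum L f.
Proof.
move=> LL f0 Ll; have [n vn] := vv_surj (LL _ Ll).
rewrite /lsum (@nneseriesD1 _ _ n xpredT) //; last by move=> k _; exact: lterm_ge0.
rewrite {1}/lterm vn; case: asboolP => // _.
by rewrite leeDl // nneseries_ge0 // => k _ _; exact: lterm_ge0.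
Qed.

Lemma lsum_two L f l1 l2 : L `<=` Lam -> (forall l, L l -> 0 <= f l) ->
  L l1 -> L l2 -> l1 != l2 -> f l1 + f l2 <= lsum L f.
Proof.
move=> LL f0 L1 L2 l12.
have [n1 v1] := vv_surj (LL _ L1); have [n2 v2] := vv_surj (LL _ L2).
have n12 : n2 != n1.
  by apply/eqP => e; move: v2; rewrite e v1 => -[] E; move: l12; rewrite E eqxx.
rewrite /lsum (@nneseriesD1 _ _ n1 xpredT) //; last by move=> k _; exact: lterm_ge0.
rewrite (@nneseriesD1 _ _ n2) //; last by move=> k _; exact: lterm_ge0.
rewrite {1}/lterm v1 {1}/lterm v2; case: asboolP => // _; case: asboolP => // _.
rewrite addeA leeDl //; apply: nneseries_ge0 => k _ _; exact: lterm_ge0.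
Qed.

Lemma lsum_uniq L (P : V -> Prop) : L `<=` Lam ->
  (forall l l', L l -> L l' -> P l -> P l' -> l = l') ->
  lsum L (fun l => if `[< P l >] then 1 else 0) =
  if `[< exists l, L l /\ P l >] then 1 else 0.
Proof.
move=> LL uP; case: asboolP => [[l [Ll Pl]]|nP]; last first.
  apply: eseries0 => n _ _; rewrite /lterm; case: (vv n) => // l.
  case: asboolP => // Ll; case: asboolP => // Pl; exfalso; apply: nP; by exists l.
have [n vn] := vv_surj (LL _ Ll).
rewrite /lsum (@nneseriesD1 _ _ n xpredT) //; last first.
  by move=> k _; apply: lterm_ge0 => l' _; case: asboolP.
rewrite {1}/lterm vn; case: asboolP => // _; case: asboolP => // _.
rewrite eseries0 ?adde0 // => k _ /= kn; rewrite /lterm.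
case vk : (vv k) => [l'|//]; case: asboolP => // L'; case: asboolP => // P'.
have ll : l' = l by exact: uP.
rewrite ll in vk; by move: kn; rewrite (vv_inj vk vn) eqxx.
Qed.

End Lat.


Section LatMeas.
Variables (R : realType) (m : nat) (B : 'M[R]_m).
Hypothesis hB : \det B != 0.
Local Notation V := 'rV[R]_m.
Local Notation T := (T R m).
Local Notation mu := (mu R m).
Local Notation Lam := (Lam B).
Local Notation vv := (vv B).
Local Notation lsum := (lsum B).
Local Notation lterm := (lterm B).
Local Open Scope ereal_scope.

Lemma lsum_bigcup L (E : V -> set V) (X : set V) : L `<=` Lam ->
  measurable (X : set T) -> (forall l, L l -> measurable (E l : set T)) ->
  (forall l l' x, L l -> L l' -> E l x -> E l' x -> l = l') ->
  lsum L (fun l => mu (X `&` E l)) = mu (X `&` [set x | exists l, L l /\ E l x]).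
Proof.
move=> LL mX mE uE.
pose D := [set n | exists l, vv n = Some l /\ L l].
pose F n : set V := X `&` (match vv n with Some l => E l | None => set0 end).
have -> : X `&` [set x | exists l, L l /\ E l x] = \bigcup_(n in D) F n.
  apply/seteqP; split => x.
    move=> [Xx [l [Ll El]]]; have [n vn] := vv_surj (LL _ Ll).
    by exists n; [exists l | rewrite /F vn].
  move=> [n [l [vn Ll]]]; rewrite /F vn => -[Xx El]; split => //; by exists l.
rewrite (measure_bigcup mu D (F : nat -> set T)); last 2 first.
- move=> i [l [vi Ll]]; rewrite /F vi; apply: measurableI => //; exact: mE.
- move=> i j [l [vi Ll]] [l' [vj Ll']] [x []]; rewrite /F vi vj => -[_ El] [_ El'].
  have ll : l' = l by exact: (uE _ _ x).
  rewrite ll in vj; exact: (vv_inj hB vi vj).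
rewrite eseries_mkcond /lsum; apply: eq_eseriesr => n _.
rewrite /lterm /F; case vn : (vv n) => [l|]; last first.
  by case: ifPn => // /set_mem [l' []]; rewrite vn.
case: (asboolP (L l)) => Ll.
  by rewrite ifT //; apply: mem_set; exists l.
by case: ifPn => // /set_mem [l' []]; rewrite vn => -[<-].
Qed.

Lemma lsum_integral L (E : V -> set V) : L `<=` Lam ->
  (forall l, L l -> measurable (E l : set T)) ->
  \int[mu]_x lsum L (fun l => (\1_(E l) x)%:E) = lsum L (fun l => mu (E l)).
Proof.
move=> LL mE; rewrite /lsum integral_nneseries; last 3 first.
- exact: measurableT.
- move=> n; rewrite /lterm; case: (vv n) => [l|]; last exact: measurable_cst.
  case: asboolP => Ll; last exact: measurable_cst.
  apply/measurable_realfun.measurable_EFinP; apply: measurable_realfun.measurable_indic; exact: mE.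
- by move=> n x _; apply: lterm_ge0 => l _; rewrite lee_fin.
apply: eq_eseriesr => n _; rewrite /lterm; case: (vv n) => [l|]; last exact: integral0.
case: asboolP => Ll; last exact: integral0.
by rewrite integral_indic ?setIT //; exact: mE.
Qed.

End LatMeas.


Section Grp.
Variables (R : realType) (m : nat).
Local Notation V := 'rV[R]_m.
Lemma sg_opp (L : set V) l : is_subgroup L -> L l -> L (- l).
Proof. by move=> [L0 Ls] Ll; rewrite -sub0r; exact: Ls. Qed.
Lemma sg_add (L : set V) a b : is_subgroup L -> L a -> L b -> L (a + b).
Proof. by move=> sL La Lb; rewrite -(opprK b); apply: sL.2 => //; exact: sg_opp. Qed.
Lemma sg_sub (L : set V) a b : is_subgroup L -> L a -> L b -> L (a - b).
Proof. by move=> sL; exact: sL.2. Qed.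
Lemma minkE (A L : set V) x : mink_sum A L x <-> exists l, L l /\ A (x - l).
Proof.
split => [[a Aa [l Ll <-]]|[l [Ll Ax]]]; first by exists l; rewrite addrK.
by exists (x - l) => //; exists l => //; rewrite subrK.
Qed.
End Grp.

Section Main.
Variables (R : realType) (m : nat) (L1 L2 C F1 F2 : set 'rV[R]_m) (B : 'M[R]_m).
Local Notation V := 'rV[R]_m.
Local Notation T := (T R m).
Local Notation mu := (mu R m).
Local Notation Lam := (Lam B).
Local Notation vv := (vv B).
Local Notation lsum := (lsum B).
Local Notation lterm := (lterm B).
Local Notation M := (mink_sum L1 L2).
Hypotheses (sg1 : is_subgroup L1) (sg2 : is_subgroup L2)
  (hI : L1 `&` L2 = [set 0]) (hM : M = Lam) (hB : \det B != 0)
  (cC : compact C) (fd1 : fund_domain L1 F1) (fd2 : fund_domain M F2).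

Lemma L1M : L1 `<=` M.
Proof. by move=> l Ll; exists l => //; exists 0; [exact: sg2.1 | rewrite addr0]. Qed.
Lemma L2M : L2 `<=` M.
Proof. by move=> l Ll; exists 0; [exact: sg1.1 | exists l => //; rewrite add0r]. Qed.
Lemma L1L : L1 `<=` Lam. Proof. by rewrite -hM; exact: L1M. Qed.
Lemma L2L : L2 `<=` Lam. Proof. by rewrite -hM; exact: L2M. Qed.
Lemma ML : M `<=` Lam. Proof. by rewrite -hM. Qed.

Lemma mU (L : set V) (E : V -> set V) : L `<=` Lam ->
  (forall l, L l -> measurable (E l : set T)) ->
  measurable ([set x | exists l, L l /\ E l x] : set T).
Proof.
move=> LL mE.
pose F n : set V := match vv n with Some l => if `[< L l >] then E l else set0
  | None => set0 end.
have -> : [set x | exists l, L l /\ E l x] = \bigcup_n F n.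
  apply/seteqP; split => x.
    move=> [l [Ll El]]; have [n vn] := vv_surj (LL _ Ll).
    by exists n => //; rewrite /F vn; case: asboolP.
  move=> [n _]; rewrite /F; case: (vv n) => [l|//]; case: asboolP => // Ll El.
  by exists l.
apply: bigcupT_measurable => n; rewrite /F; case: (vv n) => [l|]; last exact: measurable0.
by case: asboolP => Ll; [exact: mE | exact: measurable0].
Qed.

Lemma mink_trE (A L : set V) : mink_sum A L = [set x | exists l, L l /\ tr (- l) A x].
Proof. by apply/seteqP; split => x /minkE. Qed.

Lemma mC : measurable (C : set T).
Proof. apply: measurable_closed; exact: compact_closed (@norm_hausdorff _ _) cC. Qed.

Lemma mC1 : measurable (mink_sum C L1 : set T).
Proof. rewrite mink_trE; apply: mU L1L _ => l _; apply: measurable_tr; exact: mC. Qed.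

Lemma mC2 : measurable (mink_sum C M : set T).
Proof. rewrite mink_trE; apply: mU ML _ => l _; apply: measurable_tr; exact: mC. Qed.

Lemma mF1 : measurable (F1 : set T).
Proof. by apply/measurableP; exact: fd1.1. Qed.
Lemma mF2 : measurable (F2 : set T).
Proof. by apply/measurableP; exact: fd2.1. Qed.


Local Open Scope ereal_scope.

Lemma ind1 (A : set V) x : A x -> (\1_A x)%:E = 1 :> \bar R.
Proof. by move=> Ax; rewrite indicE mem_set. Qed.
Lemma ind0 (A : set V) x : ~ A x -> (\1_A x)%:E = 0 :> \bar R.
Proof. by move=> nA; rewrite indicE; case: (boolP (x \in A)) => [/set_mem //|_]. Qed.
Lemma ind_ge0 (A : set V) x : 0 <= (\1_A x)%:E :> \bar R.
Proof. by rewrite lee_fin. Qed.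

Lemma lsum_eq (L : set V) f g : (forall l, L l -> f l = g l) -> lsum L f = lsum L g.
Proof.
move=> fg; apply: eq_eseriesr => n _; rewrite /lterm; case: (vv n) => // l.
by case: asboolP => // Ll; rewrite fg.
Qed.

Lemma lsum0 (L : set V) f : (forall l, L l -> f l = 0) -> lsum L f = 0.
Proof.
move=> f0; apply: eseries0 => n _ _; rewrite /lterm; case: (vv n) => // l.
by case: asboolP => // Ll; rewrite f0.
Qed.

Lemma lsum_meas (L : set V) (E : V -> set V) :
  (forall l, L l -> measurable (E l : set T)) ->
  measurable_fun setT (fun x : T => lsum L (fun l => (\1_(E l) x)%:E)).
Proof.
move=> mE; rewrite /lsum.
have := @ge0_emeasurable_sum _ T R setT (fun n x => lterm L (fun l => (\1_(E l) x)%:E) n) xpredT.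
apply.
- by move=> n x _ _; apply: lterm_ge0 => l _; exact: ind_ge0.
- move=> n _; rewrite /lterm; case: (vv n) => [l|]; last exact: measurable_cst.
  case: asboolP => Ll; last exact: measurable_cst.
  apply/measurable_realfun.measurable_EFinP; apply: measurable_realfun.measurable_indic; exact: mE.
Qed.

Lemma muT (A : set V) l : mu (tr l A) = mu A.
Proof. exact: leb_tr. Qed.

Lemma swap_fd (G F S : set V) : measurable (G : set T) -> measurable (F : set T) ->
  measurable (S : set T) -> (forall l, L1 l -> tr l S = S) ->
  (forall x, exists! l, L1 l /\ G (x + l)%R) -> (forall x, exists! l, L1 l /\ F (x + l)%R) ->
  mu (S `&` G) = mu (S `&` F).
Proof.
move=> mG mF mS iS fG fF.
have step1 : mu (S `&` G) = lsum L1 (fun l => mu ((S `&` G) `&` tr l F)).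
  rewrite (@lsum_bigcup _ _ _ hB _ (fun l => tr l F) (S `&` G) L1L); last 3 first.
  - exact: measurableI.
  - by move=> l _; exact: measurable_tr.
  - move=> l l' x Ll Ll' h h'; have [l0 [_ u]] := fF x.
    rewrite -(u l); last by split.
    by rewrite -(u l').
  congr (mu _); apply/seteqP; split => x; last by case.
  move=> Sx; split => //; have [l0 [[Ll0 Fl0] _]] := fF x; by exists l0.
rewrite step1.
rewrite (lsum_eq (g := fun l => mu ((S `&` F) `&` tr (- l)%R G))); last first.
  move=> l Ll.
  have -> : S `&` G `&` tr l F = tr l (S `&` F `&` tr (- l)%R G).
    apply/seteqP; split => x; rewrite /tr /= /=.
      move=> [[Sx Gx] Fx]; split; last by rewrite addrK.
      by split => //; rewrite -[S]/(S) -(iS l Ll) in Sx.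
    move=> [[Sx Fx] Gx]; rewrite addrK in Gx; split => //; split => //.
    by rewrite -(iS l Ll).
  exact: muT.
rewrite (@lsum_bigcup _ _ _ hB _ (fun l => tr (- l)%R G) (S `&` F) L1L); last 3 first.
- exact: measurableI.
- by move=> l _; exact: measurable_tr.
- move=> l l' x Ll Ll' h h'; have [l0 [_ u]] := fG x.
  apply: oppr_inj; rewrite -(u (- l)%R) ?(u (- l')%R) //; split => //; exact: sg_opp.
congr (mu _); apply/seteqP; split => x; first by case.
move=> Sx; split => //; have [l0 [[Ll0 Gl0] _]] := fG x.
by exists (- l0)%R; split; [exact: sg_opp | rewrite /tr /= opprK].
Qed.


Definition G2 : set V := [set x | exists l, L2 l /\ tr (- l)%R F2 x].

Lemma mG2 : measurable (G2 : set T).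
Proof. apply: mU L2L _ => l _; apply: measurable_tr; exact: mF2. Qed.

Lemma G2_fd x : exists! l, L1 l /\ G2 (x + l)%R.
Proof.
have [m0 [[[a La [b Lb <-]] Fm0] _]] := fd2.2 x.
exists a; split.
  split => //; exists (- b)%R; split; first exact: sg_opp.
  by rewrite /tr /= opprK -addrA.
move=> a' [La' [b' [Lb' Fb']]].
have [m1 [_ u]] := fd2.2 x.
have e1 : m1 = (a - (- b))%R.
  apply: u; split; last by rewrite opprK.
  by exists a => //; exists (- (- b))%R => //; rewrite opprK.
have e2 : m1 = (a' - b')%R.
  apply: u; split; last by move: Fb'; rewrite /tr /= addrA.
  by exists a' => //; exists (- b')%R; [exact: sg_opp|].
have Ea' : a' = (a - - b + b')%R by rewrite -e1 e2 subrK.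
have E : (a - a' = (- b) - b')%R.
  by rewrite Ea' opprK opprD opprD addrA addrA subrr add0r.
have : (L1 `&` L2) (a - a')%R.
  split; first exact: sg_sub.
  rewrite E; apply: sg_sub => //; exact: sg_opp.
rewrite hI => /= /eqP; rewrite subr_eq0 => /eqP ->.
done.
Qed.

Lemma KeyA (S : set V) : measurable (S : set T) -> (forall l, L1 l -> tr l S = S) ->
  lsum L2 (fun l => mu (F2 `&` tr l S)) = mu (S `&` F1).
Proof.
move=> mS iS.
rewrite (lsum_eq (g := fun l => mu (S `&` tr (- l)%R F2))); last first.
  move=> l _.
  have -> : F2 `&` tr l S = tr l (S `&` tr (- l)%R F2).
    by apply/seteqP; split => x; rewrite /tr /= addrK => -[].
  exact: muT.
rewrite (@lsum_bigcup _ _ _ hB _ (fun l => tr (- l)%R F2) S L2L mS); last 2 first.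
- by move=> l _; apply: measurable_tr; exact: mF2.
- move=> l l' x Ll Ll' h h'; have [m0 [_ u]] := fd2.2 (x - l)%R.
  have e0 : m0 = 0%R by apply: u; split; [apply: L2M; exact: sg2.1|rewrite addr0].
  have e1 : m0 = (l - l')%R.
    apply: u; split; first by apply: L2M; exact: sg_sub.
    by move: h'; rewrite /tr /= addrA subrK.
  by apply/eqP; rewrite -subr_eq0 -e1 e0.
have -> : [set x | exists l, L2 l /\ tr (- l)%R F2 x] = G2 by [].
apply: swap_fd => //.
- exact: mG2.
- exact: mF1.
- exact: G2_fd.
- exact: fd1.2.
Qed.


Lemma alg1 (y l a : V) : (y - (a - l) = y + l - a)%R.
Proof. by rewrite opprB addrA addrAC. Qed.
Lemma alg2 (y l a : V) : (y + l - (a + l) = y - a)%R.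
Proof. by rewrite [(a + l)%R]addrC opprD addrA addrK. Qed.

Lemma mink1 (A : set V) l x : mink_sum A [set l] x <-> A (x - l)%R.
Proof.
split; first by move/minkE => [l' [-> h]].
by move=> h; apply/minkE; exists l.
Qed.

Local Notation C1 := (mink_sum C L1).

Lemma C1_shift l y : L1 l -> C1 (y + l)%R <-> C1 y.
Proof.
move=> Ll; split => /minkE [a [La h]]; apply/minkE.
  by exists (a - l)%R; split; [exact: sg_sub | rewrite alg1].
by exists (a + l)%R; split; [exact: sg_add | rewrite alg2].
Qed.

Lemma C1_inv l : L1 l -> tr l C1 = C1.
Proof.
move=> Ll; apply/seteqP; split => x; rewrite /tr /= => h.
  by apply/(C1_shift _ Ll).
by apply/(C1_shift _ Ll).
Qed.

Definition Dset : set V := [set x | C1 x /\ exists l l' : V,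
  [/\ L2 l, L2 l', l != l', mink_sum C1 [set l] x & mink_sum C1 [set l'] x]].

Lemma D_inv l : L1 l -> tr l Dset = Dset.
Proof.
move=> Ll; apply/seteqP; split => x; rewrite /tr /Dset /=.
  move=> [c1 [a [b [La Lb ab ha hb]]]]; split; first by move/(C1_shift _ Ll): c1.
  exists a, b; split => //; apply/mink1.
  - by move/mink1: ha; rewrite addrAC (C1_shift _ Ll).
  - by move/mink1: hb; rewrite addrAC (C1_shift _ Ll).
move=> [c1 [a [b [La Lb ab ha hb]]]]; split; first by apply/(C1_shift _ Ll).
exists a, b; split => //; apply/mink1; rewrite addrAC (C1_shift _ Ll); exact/mink1.
Qed.

Lemma DsetE : Dset = C1 `&` [set x | exists l, L2 l /\ (tr (- l)%R C1 `&`
   [set y | exists l', (L2 `\` [set l]) l' /\ tr (- l')%R C1 y]) x].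
Proof.
apply/seteqP; split => x.
  move=> [c1 [l [l' [Ll Ll' ll' h h']]]]; split => //; exists l; split => //.
  split; first by move/mink1: h.
  exists l'; split; last by move/mink1: h'.
  split => // /= e; by rewrite e eqxx in ll'.
move=> [c1 [l [Ll [h [l' [[Ll' nl] h']]]]]]; split => //; exists l, l'; split => //.
- by apply/eqP => e; apply: nl; rewrite /= e.
- exact/mink1.
- exact/mink1.
Qed.

Lemma mD : measurable (Dset : set T).
Proof.
rewrite DsetE; apply: measurableI; first exact: mC1.
apply: mU L2L _ => l Ll; apply: measurableI; first by apply: measurable_tr; exact: mC1.
apply: mU; first by move=> l' [? _]; exact: L2L.
by move=> l' _; apply: measurable_tr; exact: mC1.
Qed.


Lemma compact_coord_bound : exists M0 : R, forall x, C x -> forall i, (`|x ord0 i| <= M0)%R.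
Proof.
move: cC => /compact_bounded [M0 [Mr HM]]; exists (M0 + 1)%R => x Cx i.
have := HM (M0 + 1)%R; rewrite ltrDl ltr01 => /(_ isT x Cx).
apply: le_trans.
change (`|x ord0 i| <= mx_norm x)%R; rewrite mx_normrE.
by apply: (le_trans _ (le_bigmax _ _ (ord0, i))).
Qed.

Lemma muC_fin : mu C < +oo.
Proof.
have [M0 HM] := compact_coord_bound.
pose a0 : V := const_mx (- (M0 + 1))%R; pose b0 : V := const_mx (M0 + 1)%R.
apply: (@le_lt_trans _ _ (hbox_vol a0 b0)); last exact: ltry.
apply: (@le_trans _ _ (\sum_(k <oo | k == 0%N) hbox_vol a0 b0)).
  apply: ereal_inf_lbound; exists (fun=> a0), (fun=> b0), (fun k => k == 0%N); split => //.
  move=> x Cx; exists 0%N => // i; rewrite !mxE.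
  have := HM x Cx i; rewrite ler_norml => /andP[h1 h2].
  apply/andP; split; last by apply: (le_lt_trans h2); rewrite ltrDl ltr01.
  by apply: le_trans h1; rewrite lerN2 lerDl ler01.
rewrite (@nneseriesD1 _ _ 0%N) //; last by move=> *; exact: hbox_vol_ge0.
rewrite eseries0 ?adde0 // => k _ /andP[/eqP -> ]; by rewrite eqxx.
Qed.

Lemma muC1F1_fin : mu (C1 `&` F1) < +oo.
Proof.
apply: (le_lt_trans _ muC_fin).
have mCF : measurable (C1 `&` F1 : set T) by apply: measurableI; [exact: mC1|exact: mF1].
have -> : mu (C1 `&` F1) = \int[mu]_x (\1_(C1 `&` F1) x)%:E.
  by rewrite integral_indic ?setIT //; exact: measurableT.
apply: (@le_trans _ _ (\int[mu]_x lsum L1 (fun l => (\1_(F1 `&` tr (- l)%R C) x)%:E))).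
  apply: ge0_le_integral => //.
  - apply/measurable_EFinP; exact: measurable_indic.
  - apply: lsum_meas => l _; apply: measurableI; first exact: mF1.
    apply: measurable_tr; exact: mC.
  - move=> x _; have [[c1 f1]|nx] := pselect ((C1 `&` F1) x); last first.
      by rewrite ind0 //; apply: lsum_ge0 => l _; exact: ind_ge0.
    rewrite ind1; last by split.
    move/minkE: c1 => [l [Ll Cl]].
    have := @lsum_ge1 _ _ B L1 (fun l => (\1_(F1 `&` tr (- l)%R C) x)%:E) l L1L.
    by rewrite ind1 //; apply => // l' _; exact: ind_ge0.
rewrite (@lsum_integral _ _ B L1 (fun l => F1 `&` tr (- l)%R C) L1L); last first.
  move=> l _; apply: measurableI; first exact: mF1.
  apply: measurable_tr; exact: mC.
rewrite (lsum_eq (g := fun l => mu (C `&` tr l F1))); last first.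
  move=> l _.
  have -> : F1 `&` tr (- l)%R C = tr (- l)%R (C `&` tr l F1).
    by apply/seteqP; split => x; rewrite /tr /= subrK => -[].
  exact: muT.
rewrite (@lsum_bigcup _ _ _ hB _ (fun l => tr l F1) C L1L mC); last 2 first.
- by move=> l _; apply: measurable_tr; exact: mF1.
- move=> l l' x Ll Ll' h h'; have [l0 [_ u]] := fd1.2 x.
  by rewrite -(u l) ?(u l').
by apply: le_leb => x [].
Qed.


Lemma alg3 (x l a : V) : (x + l - (l - a) = x + a)%R.
Proof. by rewrite opprB addrA addrAC addrK. Qed.

Lemma arith (i : R) (N : \bar R) : (0 <= i)%R -> (i <= 1)%R -> (1 + 1) <= N ->
  i%:E + N * (2^-1)%:E <= N.
Proof.
move=> i0 i1; case: N => [r| |] //=.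
  rewrite -EFinD -EFinM !lee_fin => h; lra.
by move=> _; rewrite leey.
Qed.

Lemma ind_eqP (A A' : set V) x : (A x <-> A' x) -> (\1_A x)%:E = (\1_A' x)%:E :> \bar R.
Proof.
move=> h; have [Ax|nA] := pselect (A x).
  by rewrite !ind1 //; apply/h.
by rewrite !ind0 // => /h.
Qed.

Lemma neq_sub (l a b : V) : a != b -> (l - a)%R != (l - b)%R.
Proof. by apply: contra => /eqP e; apply/eqP; apply: oppr_inj; apply: (addrI l). Qed.

Lemma pointwise x :
  (\1_(mink_sum C M `&` F2) x)%:E
    + lsum L2 (fun l => (\1_(F2 `&` tr l Dset) x)%:E) * (2^-1)%:E
  <= lsum L2 (fun l => (\1_(F2 `&` tr l C1) x)%:E).
Proof.
have N0 : 0 <= lsum L2 (fun l => (\1_(F2 `&` tr l C1) x)%:E).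
  by apply: lsum_ge0 => l _; exact: ind_ge0.
have [F2x|nF2] := pselect (F2 x); last first.
  rewrite ind0; last by case.
  rewrite (lsum0 (L := L2)) ?mul0e ?adde0 // => l _.
  by rewrite ind0 // => -[].
pose Q := exists l l', [/\ L2 l, L2 l', l != l', C1 (x + l)%R & C1 (x + l')%R].
have keyD : forall l, L2 l -> (Dset (x + l)%R <-> C1 (x + l)%R /\ Q).
  move=> l Ll; split.
  - move=> [c1 [a [b [La Lb ab ha hb]]]]; split => //.
    exists (l - a)%R, (l - b)%R; split.
    + exact: sg_sub.
    + exact: sg_sub.
    + exact: neq_sub.
    + by move/mink1: ha; rewrite addrA.
    + by move/mink1: hb; rewrite addrA.
  - move=> [c1 [l1 [l2 [L1' L2' n12 h1 h2]]]]; split => //.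
    exists (l - l1)%R, (l - l2)%R; split.
    + exact: sg_sub.
    + exact: sg_sub.
    + exact: neq_sub.
    + by apply/mink1; rewrite alg3.
    + by apply/mink1; rewrite alg3.
have [q|nq] := pselect Q.
  have -> : lsum L2 (fun l => (\1_(F2 `&` tr l Dset) x)%:E) =
            lsum L2 (fun l => (\1_(F2 `&` tr l C1) x)%:E).
    apply: lsum_eq => l Ll; apply: ind_eqP; rewrite /tr /=.
    split => -[f h]; split => //; first by case/(keyD _ Ll): h.
    by apply/(keyD _ Ll).
  apply: arith; [by rewrite indicE | by rewrite indicE; case: (_ \in _) | ].
  move: q => [l1 [l2 [L1' L2' n12 h1 h2]]].
  have := @lsum_two _ _ B L2 (fun l => (\1_(F2 `&` tr l C1) x)%:E) l1 l2 L2L.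
  rewrite !ind1 //; apply => // l _; exact: ind_ge0.
rewrite (lsum0 (L := L2)); last first.
  move=> l Ll; rewrite ind0 // => -[_] /(keyD _ Ll) [_ ?]; exact: nq.
rewrite mul0e adde0.
have [[c2 _]|nC2] := pselect ((mink_sum C M `&` F2) x); last by rewrite ind0.
rewrite ind1; last by split.
move/minkE: c2 => [m0 [[a La [b Lb <-]] Cx]].
have := @lsum_ge1 _ _ B L2 (fun l => (\1_(F2 `&` tr l C1) x)%:E) (- b)%R L2L.
rewrite ind1; first by apply => //; exact: sg_opp.
split => //; rewrite /tr /=; apply/minkE; exists a; split => //.
by rewrite opprD addrA addrAC in Cx.
Qed.


Lemma main_ineq :
  mu (mink_sum C M `&` F2) <= mu (C1 `&` F1) - mu (Dset `&` F1) * (2^-1)%:E.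
Proof.
pose N := fun x : T => lsum L2 (fun l => (\1_(F2 `&` tr l C1) x)%:E).
pose Dt := fun x : T => lsum L2 (fun l => (\1_(F2 `&` tr l Dset) x)%:E).
have mEC1 : forall l, L2 l -> measurable (F2 `&` tr l C1 : set T).
  by move=> l _; apply: measurableI; [exact: mF2 | apply: measurable_tr; exact: mC1].
have mED : forall l, L2 l -> measurable (F2 `&` tr l Dset : set T).
  by move=> l _; apply: measurableI; [exact: mF2 | apply: measurable_tr; exact: mD].
have IN : \int[mu]_x N x = mu (C1 `&` F1).
  rewrite (@lsum_integral _ _ B L2 (fun l => F2 `&` tr l C1) L2L mEC1).
  apply: KeyA; [exact: mC1 | exact: C1_inv].
have ID : \int[mu]_x Dt x = mu (Dset `&` F1).
  rewrite (@lsum_integral _ _ B L2 (fun l => F2 `&` tr l Dset) L2L mED).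
  apply: KeyA; [exact: mD | exact: D_inv].
have mC2F2 : measurable (mink_sum C M `&` F2 : set T).
  by apply: measurableI; [exact: mC2 | exact: mF2].
have IC2 : mu (mink_sum C M `&` F2) = \int[mu]_x (\1_(mink_sum C M `&` F2) x)%:E.
  by rewrite integral_indic ?setIT //; exact: measurableT.
have mDt : measurable_fun setT Dt by exact: lsum_meas.
have mN : measurable_fun setT N by exact: lsum_meas.
have Dt0 : forall x, 0 <= Dt x by move=> x; apply: lsum_ge0 => l _; exact: ind_ge0.
have key : mu (mink_sum C M `&` F2) + mu (Dset `&` F1) * (2^-1)%:E <= mu (C1 `&` F1).
  rewrite IC2 -ID -IN -ge0_integralZr //.
  have mDc : measurable_fun setT (fun x => Dt x * (2^-1)%:E).
    exact: (emeasurable_funM mDt (measurable_cst _)).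
  have mI : measurable_fun setT (EFin \o (\1_(mink_sum C M `&` F2) : T -> R)).
    apply/measurable_EFinP; exact: measurable_indic.
  have Dc0 : forall x, 0 <= Dt x * (2^-1)%:E.
    by move=> x; apply: mule_ge0; [exact: Dt0 | rewrite lee_fin].
  rewrite -ge0_integralD //.
  apply: ge0_le_integral => //.
  - by move=> x _; apply: adde_ge0; [exact: ind_ge0 | exact: Dc0].
  - exact: emeasurable_funD.
  - by move=> x _; exact: pointwise.
have fin1 := muC1F1_fin.
have D1le : mu (Dset `&` F1) <= mu (C1 `&` F1).
  by apply: le_leb => x [[c1 _] f1].
move: key D1le fin1.
have := leb_ge0 (mink_sum C M `&` F2); have := leb_ge0 (Dset `&` F1).
have := leb_ge0 (C1 `&` F1).
rewrite -!muE.
case: (mu (C1 `&` F1)) => [c| |] //; case: (mu (Dset `&` F1)) => [d| |] //;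
  case: (mu (mink_sum C M `&` F2)) => [a| |] //.
move=> _ _ _; rewrite -EFinM -EFinD -EFinB !lee_fin => h _ _; lra.
Qed.

End Main.

Local Open Scope classical_set_scope.
Local Open Scope ring_scope.

Theorem corollary2p14 (R : realType) (m : nat)
  (L1 L2 : set 'rV[R]_m) (C : set 'rV[R]_m)
  (F1 F2 : set 'rV[R]_m) :
  is_subgroup L1 -> is_subgroup L2 ->
  L1 `&` L2 = [set 0] ->
  covol1_lattice (mink_sum L1 L2) ->
  compact C ->
  fund_domain L1 F1 ->
  fund_domain (mink_sum L1 L2) F2 ->
  let C1 := mink_sum C L1 in
  let C2 := mink_sum C (mink_sum L1 L2) in
  let D1 := quot_leb F1
        [set x | C1 x /\ exists l l' : 'rV[R]_m, [/\ L2 l, L2 l', l != l',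
                    mink_sum C1 [set l] x & mink_sum C1 [set l'] x]] in
  (quot_leb F2 C2 <= quot_leb F1 C1 - D1 * (2^-1)%:E)%E.
Proof.
move=> sg1 sg2 hI [B [dB hM]] cC fd1 fd2.
have hB : \det B != 0 by rewrite -normr_eq0 dB oner_eq0.
exact: (main_ineq sg1 sg2 hI hM hB cC fd1 fd2).
Qed.
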